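(* Let $\Sigma$ be a finite alphabet with $|\Sigma|=q$, and let $X,Y\subseteq\Sigma^{\mathbb{Z}}$ be constrained systems with capacities satisfying $h(X)\le h(Y)$. Then \[R(X,Y)\ge H_q^{-1}\big(h(Y)-h(X)\big).\]
   Context: A constrained system is a set $X\subseteq\Sigma^{\mathbb{Z}}$ for which there is a finite directed graph with edges labeled by $\Sigma$ such that $X$ is the set of label sequences of bi-infinite directed paths in the graph. $\mathscr{B}_n(X)\subseteq\Sigma^n$ is the set of length-$n$ words appearing as consecutive subwords of elements of $X$. The capacity is $h(X)=\lim_{n\to\infty}\frac{1}{n}\log_q|\mathscr{B}_n(X)|$. With $d$ the Hamming distance, for $A,C\subseteq\Sigma^n$ let $R(C,A)=\max_{\overline{y}\in A}\min_{\overline{x}\in C}d(\overline{x},\overline{y})$, and $R(X,Y)=\liminf_{n\to\infty}\frac{1}{n}R(\mathscr{B}_n(X),\mathscr{B}_n(Y))$. $H_q(x)=x\log_q(q-1)-x\log_q x-(1-x)\log_q(1-x)$ (with $H_q(0)=0$), and $H_q^{-1}:[0,1]\to[0,1-\frac1q]$ is the inverse of the restriction of $H_q$ to $[0,1-\frac1q]$. *)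

(* Defs.v *)
From Stdlib Require Import Reals ZArith ClassicalEpsilon.
From mathcomp Require Import all_boot.
From Coquelicot Require Import Coquelicot.

Set Implicit Arguments.
Unset Strict Implicit.
Unset Printing Implicit Defensive.

Definition pbool (P : Prop) : bool :=
  if excluded_middle_informative P then true else false.

Record labeled_graph (Sigma : finType) := LabeledGraph {
  lg_V : finType;
  lg_E : finType;
  lg_src : lg_E -> lg_V;
  lg_dst : lg_E -> lg_V;
  lg_lab : lg_E -> Sigma }.

Definition presented_by (Sigma : finType) (G : labeled_graph Sigma)
  (x : Z -> Sigma) : Prop :=
  exists e : Z -> lg_E G,
    (forall i : Z, lg_dst (e i) = lg_src (e (i + 1)%Z)) /\
    (forall i : Z, x i = lg_lab (e i)).

Definition constrained_system (Sigma : finType) (X : (Z -> Sigma) -> Prop) : Prop :=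
  exists G : labeled_graph Sigma, forall x, X x <-> presented_by G x.

Definition blocks (Sigma : finType) (X : (Z -> Sigma) -> Prop) (n : nat)
  : {set n.-tuple Sigma} :=
  [set w : n.-tuple Sigma | pbool (exists x, X x /\ exists i : Z,
      forall k : 'I_n, tnth w k = x (i + Z.of_nat k)%Z)].

Definition hamming (Sigma : finType) (n : nat) (w v : n.-tuple Sigma) : nat :=
  \sum_(k < n) (tnth w k != tnth v k).

(* R(C,A) = max_{y in A} min_{x in C} d(x,y)
   (an empty min is taken to be n, the maximal possible distance) *)
Definition covrad (Sigma : finType) (n : nat) (C A : {set n.-tuple Sigma}) : nat :=
  \max_(y in A) \big[minn/n]_(x in C) hamming x y.

Local Open Scope R_scope.

Definition logb (q x : R) : R := ln x / ln q.

Definition capacity (Sigma : finType) (X : (Z -> Sigma) -> Prop) : R :=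
  real (Lim_seq (fun n => logb (INR #|Sigma|) (INR #|blocks X n|) / INR n)).

Definition RXY (Sigma : finType) (X Y : (Z -> Sigma) -> Prop) : R :=
  real (LimInf_seq (fun n => INR (covrad (blocks X n) (blocks Y n)) / INR n)).

Definition Hq (q x : R) : R :=
  if Req_EM_T x 0 then 0 else
  x * logb q (q - 1) - x * logb q x - (1 - x) * logb q (1 - x).

Definition Hq_inv (q y : R) : R :=
  epsilon (inhabits 0) (fun x => 0 <= x <= 1 - 1 / q /\ Hq q x = y).

(* Main.v *)
Require Import Defs.
From Stdlib Require Import Reals ZArith Lra Lia ClassicalEpsilon Ranalysis5.
From mathcomp Require Import all_boot all_order all_algebra.
From mathcomp Require Import Rstruct zify.
From Coquelicot Require Import Coquelicot.
Import Order.TTheory GRing.Theory Num.Theory.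


Section S1.
Local Open Scope ring_scope.
Variable Sigma : finType.

Lemma sum_prod_tuple n (F : 'I_n -> Sigma -> R) :
  \sum_(y : n.-tuple Sigma) \prod_(k < n) F k (tnth y k) =
  \prod_(k < n) \sum_(b : Sigma) F k b.
Proof.
rewrite bigA_distr_bigA /=.
rewrite (reindex (@finfun_of_tuple Sigma n)) /=; last first.
  by exists (@tuple_of_finfun Sigma n) => x _; [rewrite finfun_of_tupleK|rewrite tuple_of_finfunK].
apply: eq_bigr => y _; apply: eq_bigr => k _; by rewrite ffunE.
Qed.

Variables al be : R.
Definition wf (a b : Sigma) : R := if a == b then be else al.

Lemma sum_wf a : \sum_b wf a b = be + (#|Sigma|.-1)%:R * al.
Proof.
rewrite (bigD1 a) //= /wf eqxx; congr (_ + _).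
rewrite (eq_bigr (fun _ => al)); last by move=> b; rewrite eq_sym => /negbTE ->.
by rewrite sumr_const cardC1 mulr_natl.
Qed.

Lemma hamming_card n (x y : n.-tuple Sigma) :
  hamming x y = #|[pred k | tnth x k != tnth y k]|.
Proof.
rewrite -sum1_card [in RHS]big_mkcond /hamming /=; apply: eq_bigr => k _.
by rewrite inE; case: (_ != _).
Qed.

Lemma prod_wf n (x y : n.-tuple Sigma) :
  \prod_(k < n) wf (tnth x k) (tnth y k) =
  al ^+ hamming x y * be ^+ (n - hamming x y).
Proof.
rewrite (bigID (fun k => tnth x k != tnth y k)) /=.
rewrite (eq_bigr (fun _ => al)); last by move=> k /negbTE; rewrite /wf => ->.
rewrite [X in _ * X](eq_bigr (fun _ => be)); last by move=> k /negPn; rewrite /wf => ->.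
rewrite !prodr_const hamming_card; congr (_ * _ ^+ _).
have := cardC [pred k | tnth x k != tnth y k]; rewrite card_ord => Hc.
apply/eqP; rewrite -(eqn_add2l #|[pred k | tnth x k != tnth y k]|) subnKC.
  rewrite -[X in _ == X]Hc; apply/eqP; congr (_ + _); apply: eq_card => k; rewrite !inE.
by rewrite -[X in (_ <= X)%N]Hc leq_addr.
Qed.

Lemma wf_ge0 a b : 0 <= al -> 0 <= be -> 0 <= wf a b.
Proof. by rewrite /wf; case: (a == b). Qed.

Lemma wbound n d r : 0 <= al -> al <= be -> (d <= r)%N -> (r <= n)%N ->
  al ^+ r * be ^+ (n - r) <= al ^+ d * be ^+ (n - d).
Proof.
move=> a0 ab dr rn.
have b0 : 0 <= be by apply: le_trans ab.
rewrite -{1}(subnKC dr) exprD.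
have -> : (n - d = (r - d) + (n - r))%N by lia.
rewrite exprD mulrA -!mulrA; apply: ler_wpM2l; first exact: exprn_ge0.

apply: ler_wpM2r; first exact: exprn_ge0.
apply: lerXn2r => //; by rewrite nnegrE.
Qed.

Lemma step1 n (A B : {set n.-tuple Sigma}) r :
  0 <= al -> al <= be -> be + (#|Sigma|.-1)%:R * al = 1 -> (r <= n)%N ->
  (forall y, y \in B -> exists2 x, x \in A & (hamming x y <= r)%N) ->
  #|B|%:R * (al ^+ r * be ^+ (n - r)) <= #|A|%:R.
Proof.
move=> a0 ab s1 rn Hcov.
have b0 : 0 <= be by apply: le_trans ab.
pose w (x y : n.-tuple Sigma) := \prod_(k < n) wf (tnth x k) (tnth y k).
have w0 x y : 0 <= w x y by apply: prodr_ge0 => k _; apply: wf_ge0.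
have tot x : \sum_y w x y = 1.
  rewrite /w (@sum_prod_tuple n (fun k b => wf (tnth x k) b)).
  by rewrite (eq_bigr (fun _ => 1)) ?prodr_const ?expr1n // => k _; rewrite sum_wf.
apply: (@le_trans _ _ (\sum_(y in B) \sum_(x in A) w x y)).
  rewrite mulr_natl -sumr_const.
  apply: ler_sum => y yB; have [x xA hxy] := Hcov y yB.
  rewrite (bigD1 x) //= -[X in X <= _]addr0; apply: lerD; last first.
    by apply: sumr_ge0 => ? _; apply: w0.
  by rewrite /w prod_wf; apply: wbound.
apply: (@le_trans _ _ (\sum_y \sum_(x in A) w x y)).
  rewrite [X in _ <= X](bigID (fun y => y \in B)) /= -[X in X <= _]addr0.
  apply: lerD => //; apply: sumr_ge0 => y _; apply: sumr_ge0 => x _; exact: w0.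
rewrite exchange_big /= -sumr_const; apply: ler_sum => x _.
by rewrite tot.
Qed.
End S1.

Lemma pboolP (P : Prop) : pbool P = true <-> P.
Proof. rewrite /pbool; case: excluded_middle_informative => //. Qed.

Lemma in_blocks (Sigma : finType) (X : (Z -> Sigma) -> Prop) n w :
  w \in blocks X n <-> (exists x, X x /\ exists i : Z,
      forall k : 'I_n, tnth w k = x (Z.add i (Z.of_nat k))).
Proof. by rewrite inE; apply: pboolP. Qed.

Lemma cover (Sigma : finType) n (A B : {set n.-tuple Sigma}) :
  (covrad A B < n)%N -> forall y, y \in B ->
  exists2 x, x \in A & (hamming x y <= covrad A B)%N.
Proof.
move=> Hn y yB.
have H1 : (\big[minn/n]_(x in A) hamming x y <= covrad A B)%N.
  by rewrite /covrad; apply: (@leq_bigmax_cond _ (fun y => y \in B) (fun y => \big[minn/n]_(x in A) hamming x y)).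
case: (boolP [exists x in A, (hamming x y <= covrad A B)%N]).
  by move=> /exists_inP [x xA h]; exists x.
move=> /exists_inPn Hall; exfalso.
suff : (covrad A B < \big[minn/n]_(x in A) hamming x y)%N by rewrite ltnNge H1.
apply: (big_ind (fun v => covrad A B < v)%N) => //.
  by move=> a b ha hb; rewrite leq_min ha hb.
by move=> x xA; rewrite ltnNge; apply: Hall.
Qed.

Lemma blocks_sub (Sigma : finType) (X : (Z -> Sigma) -> Prop) m n :
  (#|blocks X (m + n)| <= #|blocks X m| * #|blocks X n|)%N.
Proof.
pose l (w : (m + n).-tuple Sigma) : m.-tuple Sigma := [tuple tnth w (lshift n k) | k < m].
pose rr (w : (m + n).-tuple Sigma) : n.-tuple Sigma := [tuple tnth w (rshift m k) | k < n].
have inj : injective (fun w => (l w, rr w)).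
  move=> w w' E; apply: eq_from_tnth => i.
  case: (splitP i) => [j Hj|j Hj].
    have -> : i = lshift n j by apply/val_inj.
    by have := congr1 (fun t => tnth t.1 j) E; rewrite /l !tnth_mktuple.
  have -> : i = rshift m j by apply/val_inj.
  by have := congr1 (fun t => tnth t.2 j) E; rewrite /rr !tnth_mktuple.
rewrite -cardsX -(card_imset _ inj); apply: subset_leq_card.
apply/subsetP => p /imsetP [w wB ->]; rewrite in_setX.
move: wB => /in_blocks [x [Xx [i Hi]]].
apply/andP; split; apply/in_blocks; exists x; split => //.
  by exists i => k; rewrite tnth_mktuple Hi.
exists (Z.add i (Z.of_nat m)) => k; rewrite tnth_mktuple Hi /=.
by congr x; rewrite Nat2Z.inj_add; lia.
Qed.

Lemma blocks_le (Sigma : finType) (X : (Z -> Sigma) -> Prop) n :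
  (#|blocks X n| <= #|Sigma| ^ n)%N.
Proof. by rewrite -card_tuple; apply: max_card. Qed.

Open Scope R_scope.

Lemma INR_add m n : INR (m + n)%N = INR m + INR n.
Proof. exact: plus_INR. Qed.
Lemma INR_mul m n : INR (m * n)%N = INR m * INR n.
Proof. exact: mult_INR. Qed.

Lemma fekete (s : nat -> R) : (forall n, 0 <= s n) ->
  (forall m n, s (m + n)%N <= s m + s n) ->
  exists l : R, is_lim_seq (fun n => s n / INR n) l.
Proof.
move=> s0 sub.
pose F x := exists m, (0 < m)%N /\ x = - (s m / INR m).
have bF : bound F.
  exists 0 => x [m [hm ->]].
  have mp : 0 < INR m by apply: lt_0_INR; apply/ssrnat.ltP.
  suff : 0 <= s m / INR m by lra.
  by apply: Rdiv_le_0_compat.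
have nF : exists x, F x by exists (- (s 1%N / INR 1)), 1%N.
have [M [HM1 HM2]] := completeness F bF nF.
set l := - M.
have lb m : (0 < m)%N -> l <= s m / INR m.
  move=> hm; have := HM1 _ (ex_intro _ m (conj hm erefl)); rewrite /l; lra.
have approx eps : 0 < eps -> exists m, (0 < m)%N /\ s m / INR m < l + eps.
  move=> he; apply: NNPP => hne.
  have : M <= M - eps.
    apply: HM2 => x [m [hm ->]].
    suff : l + eps <= s m / INR m by rewrite /l; lra.
    apply: Rnot_lt_le => h; apply: hne; exists m; split => //.
  lra.
have lin j : s j <= s 0%N + INR j * s 1%N.
  elim: j => [|j IH]; first by rewrite /=; lra.
  rewrite S_INR; have := sub j 1%N; rewrite addn1; lra.
have blk m k j : s (k * m + j)%N <= INR k * s m + s j.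
  elim: k => [|k IH]; first by rewrite mul0n add0n /=; lra.
  have -> : (k.+1 * m + j = m + (k * m + j))%N by rewrite mulSn addnA.
  rewrite S_INR; have := sub m (k * m + j)%N; lra.
exists l; apply/is_lim_seq_spec => eps.
have [m [hm Hm]] := approx (eps / 2) ltac:(have := cond_pos eps; lra).
have mpos : 0 < INR m by apply: lt_0_INR; apply/ssrnat.ltP.
set C := s 0%N + INR m * s 1%N.
have C0 : 0 <= C.
  have := s0 0%N; have := s0 1%N => *; rewrite /C; nra.
have epos := cond_pos eps.
have [N HN] : exists N, / INR N < eps / (2 * (C + 1)) /\ (0 < N)%coq_nat.
  apply: archimed_cor1; apply: Rdiv_lt_0_compat; lra.
exists N => n hn.
destruct HN as [HN1 HN2].
have npos : 0 < INR n by apply: lt_0_INR; lia.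
have nN : INR N <= INR n by apply: le_INR.
have hup : s n <= INR (n %/ m) * s m + C.
  have := blk m (n %/ m)%N (n %% m)%N; rewrite -divn_eq => h.
  have := lin (n %% m)%N.
  have : INR (n %% m) <= INR m by apply: le_INR; apply/ssrnat.leP; apply: ltnW; rewrite ltn_mod.
  have := s0 1%N; rewrite /C; nra.
have hk : INR (n %/ m) * INR m <= INR n.
  rewrite -INR_mul; apply: le_INR; apply/ssrnat.leP; by rewrite leq_trunc_div.
have hlow := lb n ltac:(apply/ssrnat.ltP; lia).
have hup2 : s n / INR n <= s m / INR m + C / INR n.
  apply: (Rmult_le_reg_r (INR n)) => //.
  rewrite Rmult_plus_distr_r /Rdiv !Rmult_assoc Rinv_l; last lra.
  have E : s m * (/ INR m * INR n) >= INR (n %/ m) * s m.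
    have := s0 m.
    have : INR (n %/ m) <= / INR m * INR n.
      apply: (Rmult_le_reg_l (INR m)) => //; rewrite -Rmult_assoc Rinv_r; lra.
    nra.
  lra.
have hC : C / INR n < eps / 2.
  have Np : 0 < INR N by apply: lt_0_INR.
  have h1 : C / INR n <= (C + 1) * / INR N.
    apply: Rmult_le_compat; try lra.
      by apply: Rlt_le; apply: Rinv_0_lt_compat.
    by apply: Rinv_le_contravar.
  have h2 : (C + 1) * / INR N < (C + 1) * (eps / (2 * (C + 1))).
    by apply: Rmult_lt_compat_l; lra.
  have h3 : (C + 1) * (eps / (2 * (C + 1))) = eps / 2 by field; lra.
  lra.
apply: Rabs_def1; lra.
Qed.

Section G.
Variable Q : R.
Hypothesis HQ : 2 <= Q.

Definition g (t : R) := t * ln (Q - 1) - t * ln t - (1 - t) * ln (1 - t).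

Lemma g_deriv t : 0 < t < 1 ->
  derivable_pt_lim g t (ln (Q - 1) - ln t + ln (1 - t)).
Proof.
move=> ht; apply/is_derive_Reals; rewrite /g.
auto_derive; first by repeat split; lra.
rewrite /Rminus; field; lra.
Qed.

Lemma g_cont t : 0 < t < 1 -> continuity_pt g t.
Proof.
move=> ht; apply: derivable_continuous_pt.
by exists (ln (Q - 1) - ln t + ln (1 - t)); apply: g_deriv.
Qed.

Lemma g_mono p x : 0 < p -> p < x -> x <= 1 - 1 / Q -> g p < g x.
Proof.
move=> p0 px x1.
have Q0 : 0 < Q by lra.
have hQ : 1 / Q <= 1 / 2 by apply: Rmult_le_compat_l; [lra| apply: Rinv_le_contravar; lra].
have q0 : 0 < 1 / Q by apply: Rdiv_lt_0_compat; lra.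
have [c [Hc1 Hc2]] : exists c, g x - g p = (ln (Q - 1) - ln c + ln (1 - c)) * (x - p) /\ p < c < x.
  apply: (@MVT_cor2 g (fun t => ln (Q - 1) - ln t + ln (1 - t)) p x px).
  move=> c hc; apply: g_deriv; lra.
suff : 0 < ln (Q - 1) - ln c + ln (1 - c) by move=> h; nra.
have : ln c < ln ((Q - 1) * (1 - c)); last by rewrite ln_mult; lra.
apply: ln_increasing; first lra.
have : c < 1 - 1 / Q by lra.
have : (Q - 1) * (1 - c) - c = Q * (1 - 1 / Q - c) by field; lra.
nra.
Qed.

Lemma g_ge0 t : 0 < t < 1 -> 0 <= g t.
Proof.
move=> ht; rewrite /g.
have h1 : 0 <= ln (Q - 1) by rewrite -ln_1; apply: ln_le; lra.
have h2 : ln t <= 0 by rewrite -ln_1; apply: ln_le; lra.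
have h3 : ln (1 - t) <= 0 by rewrite -ln_1; apply: ln_le; lra.
nra.
Qed.

Lemma g_top : g (1 - 1 / Q) = ln Q.
Proof.
rewrite /g.
have Q0 : 0 < Q by lra.
have -> : 1 - (1 - 1 / Q) = / Q by field; lra.
have -> : 1 - 1 / Q = (Q - 1) / Q by field; lra.
rewrite ln_div ?ln_Rinv; try lra.
rewrite /Rminus; field; lra.
Qed.


Lemma ln_le_sub1 u : 0 < u -> ln u <= u - 1.
Proof. move=> u0; have := exp_ineq1_le (ln u); rewrite exp_ln //; lra. Qed.

Lemma g_small y : 0 < y -> exists e, 0 < e <= / 4 /\ g e < y.
Proof.
move=> y0.
have l0 : 0 <= ln (Q - 1) by rewrite -ln_1; apply: ln_le; lra.
set K := ln (Q - 1) + 3.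
set d := Rmin (/ 2) (y / (2 * K)).
have K0 : 0 < K by rewrite /K; lra.
have d0 : 0 < d by apply: Rmin_pos; [lra| apply: Rdiv_lt_0_compat; lra].
have d1 : d <= / 2 by apply: Rmin_l.
have d2 : d <= y / (2 * K) by apply: Rmin_r.
have dK : d * K <= y / 2.
  have -> : y / 2 = y / (2 * K) * K by field; lra.
  by apply: Rmult_le_compat_r; lra.
exists (d * d); split; first by split; nra.
rewrite /g.
have h1 : - (d * d * ln (d * d)) <= 2 * d.
  rewrite ln_mult //.
  have := ln_le_sub1 (/ d) ltac:(by apply: Rinv_0_lt_compat).
  rewrite ln_Rinv // => h.
  have e1 : d * d * (/ d - 1) = d - d * d by field; lra.
  have := Rmult_le_compat_l (d * d) _ _ ltac:(nra) h.
  rewrite e1. nra.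
have h2 : - ((1 - d * d) * ln (1 - d * d)) <= d * d.
  have hd : 0 < 1 - d * d by nra.
  have := ln_le_sub1 (/ (1 - d * d)) ltac:(by apply: Rinv_0_lt_compat).
  rewrite ln_Rinv // => h.
  have e1 : (1 - d * d) * (/ (1 - d * d) - 1) = d * d by field; lra.
  have := Rmult_le_compat_l (1 - d * d) _ _ ltac:(nra) h.
  rewrite e1. nra.
have dd : d * d <= d by nra.
have h3 := Rmult_le_compat_r (ln (Q - 1)) _ _ l0 dd.
rewrite /K in dK. nra.
Qed.
End G.

Lemma powE (x : R) n : x ^ n = (x ^+ n)%R.
Proof. elim: n => [|n IH] //=; by rewrite IH GRing.exprS. Qed.

Lemma step1R (Sigma : finType) n (A B : {set n.-tuple Sigma}) r (al be : R) :
  (0 < #|Sigma|)%N ->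
  0 <= al -> al <= be -> be + (INR #|Sigma| - 1) * al = 1 -> (r <= n)%N ->
  (forall y, y \in B -> exists2 x, x \in A & (hamming x y <= r)%N) ->
  INR #|B| * (al ^ r * be ^ (n - r)) <= INR #|A|.
Proof.
move=> q0 a0 ab s1 rn Hc.
have E : INR #|Sigma| = INR (#|Sigma|.-1) + 1 by rewrite -S_INR prednK.
have a0' : (0 <= al)%R by apply/RleP.
have ab' : (al <= be)%R by apply/RleP.
have := @step1 Sigma al be n A B r a0' ab' _ rn Hc.
rewrite !powE !INRE => h; apply/RleP; apply: h.
rewrite -INRE; rewrite E in s1.
have hh : be + INR (#|Sigma|.-1) * al = 1 by rewrite -s1; ring.
exact: hh.
Qed.

Lemma ln0 : ln 0 = 0.
Proof. rewrite /ln; case: Rlt_dec => h; [exfalso; exact: (Rlt_irrefl _ h) | reflexivity]. Qed.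

Lemma ln_INR_ge0 k : 0 <= ln (INR k).
Proof.
case: k => [|k]; first by rewrite /= ln0; lra.
rewrite -ln_1; apply: ln_le; first lra.
rewrite S_INR; have := pos_INR k; lra.
Qed.

Lemma INR_sub m n : (n <= m)%N -> INR (m - n)%N = INR m - INR n.
Proof. move=> h; apply: minus_INR; exact/ssrnat.leP. Qed.

Lemma step_log (Q p : R) n r (a b : nat) : 2 <= Q -> (0 < n)%N ->
  0 < p <= 1 - 1 / Q -> INR r <= p * INR n -> (r <= n)%N ->
  INR b * ((p / (Q - 1)) ^ r * (1 - p) ^ (n - r)) <= INR a ->
  ln (INR b) <= ln (INR a) + INR n * g Q p.
Proof.
move=> HQ n0 hp hr rn hW.
have q0 : 0 < 1 / Q by apply: Rdiv_lt_0_compat; lra.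
have hQ : 1 / Q <= 1 / 2 by apply: Rmult_le_compat_l; [lra| apply: Rinv_le_contravar; lra].
set al := p / (Q - 1).
set be := 1 - p.
have al0 : 0 < al by apply: Rdiv_lt_0_compat; lra.
have be0 : 0 < be by rewrite /be; lra.
have ab : al <= be.
  rewrite /al /be; apply: (Rmult_le_reg_r (Q - 1)); first lra.
  rewrite /Rdiv Rmult_assoc Rinv_l; last lra.
  have : p <= 1 - 1 / Q by lra.
  have : 1 / Q * Q = 1 by field; lra.
  nra.
have npos : 0 < INR n by apply: lt_0_INR; apply/ssrnat.ltP.
have gp : 0 <= g Q p by apply: g_ge0; lra.
case: b hW => [|b] hW.
  rewrite /= ln0; have := ln_INR_ge0 a; nra.
have bpos : 0 < INR b.+1 by apply: lt_0_INR; lia.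
have Wpos : 0 < al ^ r * be ^ (n - r) by apply: Rmult_lt_0_compat; apply: pow_lt.
have h1 : ln (INR b.+1 * (al ^ r * be ^ (n - r))) <= ln (INR a).
  apply: ln_le => //; by apply: Rmult_lt_0_compat.
rewrite !ln_mult ?Rpower.ln_pow // in h1; try apply: pow_lt => //.
have e : INR (n - r) = INR n - INR r by apply: minus_INR; apply/ssrnat.leP.
rewrite e in h1.
have hle : ln al <= ln be by apply: ln_le.
have hprod : (p * INR n - INR r) * (ln al - ln be) <= 0.
  have d1 : 0 <= p * INR n - INR r by lra.
  have d2 : ln al - ln be <= 0 by lra.
  nra.
have eal : ln al = ln p - ln (Q - 1) by rewrite /al ln_div; lra.
rewrite /g; rewrite eal /be in hprod h1.
nra.
Qed.

Ltac case_if_R := match goal with |- context [if ?c then _ else _] => destruct c as [hc|hc] end.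

Lemma Hq_eq Q t : 1 < Q -> t <> 0 -> Hq Q t = g Q t / ln Q.
Proof.
move=> HQ t0; rewrite /Hq; case: (RIneq.Req_EM_T t 0) => hc; first by case: (t0 hc).
have : 0 < ln Q by rewrite -ln_1; apply: ln_increasing; lra.
rewrite /logb /g /= => h; field; lra.
Qed.

Lemma g_cont_c Q c a : 0 < a < 1 -> continuity_pt (fun t => g Q t - c) a.
Proof.
move=> h; apply: derivable_continuous_pt.
exists (ln (Q - 1) - ln a + ln (1 - a) - 0).
apply/is_derive_Reals; apply: is_derive_minus; last exact: is_derive_const.
by apply/is_derive_Reals; apply: g_deriv.
Qed.

Lemma Hq_inv_spec Q y : 2 <= Q -> 0 <= y <= 1 ->
  (0 <= Hq_inv Q y <= 1 - 1 / Q) /\ Hq Q (Hq_inv Q y) = y.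
Proof.
move=> HQ hy.
have lQ : 0 < ln Q by rewrite -ln_1; apply: ln_increasing; lra.
have q0 : 0 < 1 / Q by apply: Rdiv_lt_0_compat; lra.
have hQ : 1 / Q <= 1 / 2 by apply: Rmult_le_compat_l; [lra| apply: Rinv_le_contravar; lra].
suff [x hx] : exists x, (0 <= x <= 1 - 1 / Q) /\ Hq Q x = y.
  have := epsilon_spec (inhabits (0:R)) (fun x => (0 <= x <= 1 - 1 / Q) /\ Hq Q x = y) (ex_intro _ x hx).
  by [].
case: (Req_EM_T y 0) => [->|y0].
  exists 0; split; first lra.
  by rewrite /Hq; case: (RIneq.Req_EM_T 0 0) => hc; last by case: hc.
case: (Req_EM_T y 1) => [->|y1].
  exists (1 - 1 / Q); split; first lra.
  rewrite Hq_eq; try lra.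
  rewrite g_top; try lra; field; lra.
have [e [he1 he2]] := g_small Q HQ (y * ln Q) ltac:(apply: Rmult_lt_0_compat; lra).
have [z [hz1 hz2]] := @IVT_interv (fun t => g Q t - y * ln Q) e (1 - 1 / Q)
  ltac:(move=> a ha; apply: g_cont_c; lra)
  ltac:(lra) ltac:(lra) ltac:(rewrite /= g_top; [nra|lra]).
exists z; split; first lra.
rewrite Hq_eq; try lra.
have -> : g Q z = y * ln Q by lra.
field; lra.
Qed.

Lemma INR_exp q n : INR (q ^ n)%N = INR q ^ n.
Proof. elim: n => [|n IH] //=; by rewrite expnS INR_mul IH. Qed.

Lemma div_INR_ge0 x n : 0 <= x -> 0 <= x / INR n.
Proof.
case: n => [|n] h; first by rewrite /= /Rdiv Rinv_0; lra.
apply: Rdiv_le_0_compat => //; apply: lt_0_INR; lia.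
Qed.

Lemma cap_lim (Sigma : finType) (X : (Z -> Sigma) -> Prop) : (1 < #|Sigma|)%N ->
  is_lim_seq (fun n => logb (INR #|Sigma|) (INR #|blocks X n|) / INR n) (capacity X)
  /\ 0 <= capacity X <= 1.
Proof.
move=> q1.
set Q := INR #|Sigma|.
have HQ : 2 <= Q by rewrite /Q; have := le_INR 2 _ (ssrnat.leP q1); rewrite /=; lra.
have lQ : 0 < ln Q by rewrite -ln_1; apply: ln_increasing; lra.
set s := fun n => ln (INR #|blocks X n|) / ln Q.
have s0 n : 0 <= s n by apply: Rdiv_le_0_compat => //; apply: ln_INR_ge0.
have sub m n : s (m + n)%N <= s m + s n.
  rewrite /s -Rdiv_plus_distr; apply: Rmult_le_compat_r; first by apply: Rlt_le; apply: Rinv_0_lt_compat.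
  have hb := @blocks_sub Sigma X m n.
  case E : #|blocks X (m + n)| => [|k].
    rewrite /= ln0; have := ln_INR_ge0 #|blocks X m|; have := ln_INR_ge0 #|blocks X n| => h1 h2; exact: Rplus_le_le_0_compat.
  rewrite E in hb.
  have hm : (0 < #|blocks X m|)%N by rewrite lt0n; apply/eqP => h; rewrite h mul0n in hb.
  have hn : (0 < #|blocks X n|)%N by rewrite lt0n; apply/eqP => h; rewrite h muln0 in hb.
  have hm' : 0 < INR #|blocks X m| by apply: lt_0_INR; apply/ssrnat.ltP.
  have hn' : 0 < INR #|blocks X n| by apply: lt_0_INR; apply/ssrnat.ltP.
  rewrite -ln_mult // -INR_mul; apply: ln_le; first by apply: lt_0_INR; lia.
  by apply: le_INR; apply/ssrnat.leP.
have [l Hl] := fekete s s0 sub.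
have Hcap : capacity X = l.
  change (real (Lim_seq (fun n => s n / INR n)) = l).
  by rewrite (is_lim_seq_unique _ _ Hl).
rewrite Hcap; split => //; split.
  have := is_lim_seq_le (fun _ => 0) _ 0 l (fun n => div_INR_ge0 (s n) n (s0 n)) (is_lim_seq_const 0) Hl.
  by [].
have le1 n : s n / INR n <= 1.
  case: n => [|n]; first by rewrite /= /Rdiv Rinv_0; lra.
  have np : 0 < INR n.+1 by apply: lt_0_INR; lia.
  apply: (Rmult_le_reg_r (INR n.+1)) => //.
  rewrite /Rdiv Rmult_assoc Rinv_l; last lra.
  rewrite Rmult_1_r Rmult_1_l /s.
  apply: (Rmult_le_reg_r (ln Q)) => //.
  rewrite /Rdiv Rmult_assoc Rinv_l; last lra.
  rewrite Rmult_1_r -Rpower.ln_pow; last lra.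
  case E : #|blocks X n.+1| => [|k].
    rewrite /= ln0; rewrite -ln_1; apply: ln_le; first lra.
    have := pow_R1_Rle Q n ltac:(lra); nra.
  apply: ln_le; first by apply: lt_0_INR; lia.
  rewrite /Q -INR_exp -E; apply: le_INR; apply/ssrnat.leP; exact: (@blocks_le Sigma X).
have := is_lim_seq_le _ (fun _ => 1) l 1 le1 Hl (is_lim_seq_const 1).
by [].
Qed.

Lemma covrad_le (Sigma : finType) n (A B : {set n.-tuple Sigma}) : (covrad A B <= n)%N.
Proof.
rewrite /covrad; apply/bigmax_leqP => y _.
apply: (big_ind (fun v => v <= n)%N) => //.
  by move=> a b ha _; apply: leq_trans (geq_minl a b) ha.
move=> x _; rewrite hamming_card.
by rewrite -[X in (_ <= X)%N](card_ord n) max_card.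
Qed.

Lemma al_be Q p : 2 <= Q -> 0 < p <= 1 - 1 / Q ->
  0 < p / (Q - 1) /\ p / (Q - 1) <= 1 - p.
Proof.
move=> HQ hp; split; first by apply: Rdiv_lt_0_compat; lra.
apply: (Rmult_le_reg_r (Q - 1)); first lra.
rewrite /Rdiv Rmult_assoc Rinv_l; last lra.
have : 1 / Q * Q = 1 by field; lra.
nra.
Qed.

Lemma main_R (Sigma : finType) (X Y : (Z -> Sigma) -> Prop) :
  (1 < #|Sigma|)%N ->
  constrained_system X -> constrained_system Y ->
  Rle (capacity X) (capacity Y) ->
  Rge (RXY X Y) (Hq_inv (INR #|Sigma|) (Rminus (capacity Y) (capacity X))).
Proof.
move=> q1 _ _ hle.
set Q := INR #|Sigma|.
have HQ : 2 <= Q by rewrite /Q; have := le_INR 2 _ (ssrnat.leP q1); rewrite /=; lra.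
have lQ : 0 < ln Q by rewrite -ln_1; apply: ln_increasing; lra.
have [limX [hX0 hX1]] := @cap_lim Sigma X q1.
have [limY [hY0 hY1]] := @cap_lim Sigma Y q1.
set y := capacity Y - capacity X.
have hy : 0 <= y <= 1 by rewrite /y; lra.
have [[x0 x1] Hx] := Hq_inv_spec Q y HQ hy.
set x := Hq_inv Q y in x0 x1 Hx *.
set rho := fun n => INR (covrad (blocks X n) (blocks Y n)) / INR n.
have rho0 n : 0 <= rho n by apply: div_INR_ge0; apply: pos_INR.
have rho1 n : rho n <= 1.
  rewrite /rho; case: n => [|n]; first by rewrite /= /Rdiv Rinv_0; lra.
  have np : 0 < INR n.+1 by apply: lt_0_INR; lia.
  apply: (Rmult_le_reg_r (INR n.+1)) => //.
  rewrite /Rdiv Rmult_assoc Rinv_l; last lra.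
  rewrite Rmult_1_r Rmult_1_l; apply: le_INR; apply/ssrnat.leP; exact: covrad_le.
have HL : is_LimInf_seq rho (LimInf_seq rho) := proj2_sig (ex_LimInf_seq rho).
rewrite /RXY -/rho.
case: (LimInf_seq rho) HL => [L| |] HL; last first.
- by have [n [_ hn]] := HL (-1) 0%nat; have := rho0 n; lra.
- by have [N HN] := HL 2; have := HN N (le_n N); have := rho1 N; lra.
rewrite /=; apply: Rnot_lt_ge => hLx.
have L0 : 0 <= L.
  apply: Rnot_lt_le => hL.
  have [hL1 _] := HL (mkposreal (- L / 2) ltac:(lra)).
  have [n [_ hn]] := hL1 0%nat; have := rho0 n; rewrite /=in hn; lra.
set p := (L + x) / 2.
have hp : 0 < p <= 1 - 1 / Q by rewrite /p; lra.
have gpx : g Q p < g Q x by apply: g_mono => //; rewrite /p; lra.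
have Hqx : Hq Q x = g Q x / ln Q by apply: Hq_eq; lra.
set d := (g Q x - g Q p) / ln Q.
have d0 : 0 < d by apply: Rdiv_lt_0_compat; lra.
have [NY HNY] := (proj2 (is_lim_seq_spec _ _) limY) (mkposreal (d / 2) ltac:(lra)).
have [NX HNX] := (proj2 (is_lim_seq_spec _ _) limX) (mkposreal (d / 2) ltac:(lra)).
have [hL1 _] := HL (mkposreal (p - L) ltac:(rewrite /p; lra)).
have [n [hn hrho]] := hL1 (maxn 1 (maxn NX NY)).
move/ssrnat.leP: hn; rewrite !geq_max => /and3P [n1 nX nY].
have eY := HNY n (ssrnat.leP nY); have eX := HNX n (ssrnat.leP nX).
rewrite /= in eY eX hrho; rewrite /rho in hrho.
have npos : 0 < INR n by apply: lt_0_INR; apply/ssrnat.ltP.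
set r := covrad (blocks X n) (blocks Y n) in hrho.
have hr : INR r < p * INR n.
  have : INR r / INR n * INR n < p * INR n by apply: Rmult_lt_compat_r; lra.
  by rewrite /Rdiv Rmult_assoc Rinv_l ?Rmult_1_r; lra.
have p1 : p < 1.
  have : 0 < 1 / Q by apply: Rdiv_lt_0_compat; lra.
  lra.
have rn : (r < n)%N by apply/ssrnat.ltP; apply: INR_lt; nra.
have [al0 ab] := al_be Q p HQ hp.
have hW := @step1R Sigma n (blocks X n) (blocks Y n) r (p / (Q - 1)) (1 - p)
  ltac:(by apply: ltnW) ltac:(lra) ab ltac:(rewrite -/Q; field; lra) (ltnW rn) (@cover Sigma n (blocks X n) (blocks Y n) rn).
have hlog := step_log Q p n r _ _ HQ n1 hp (Rlt_le _ _ hr) (ltnW rn) hW.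
have hu : ln (INR #|blocks Y n|) / ln Q / INR n <=
          ln (INR #|blocks X n|) / ln Q / INR n + g Q p / ln Q.
  have -> : g Q p / ln Q = INR n * g Q p / ln Q / INR n by field; lra.
  rewrite -!Rdiv_plus_distr; apply: Rmult_le_compat_r.
    by apply: Rlt_le; apply: Rinv_0_lt_compat.
  apply: Rmult_le_compat_r; last by [].
  by apply: Rlt_le; apply: Rinv_0_lt_compat.
rewrite /logb -/Q in eX eY.
have := Rabs_def2 _ _ eX; have := Rabs_def2 _ _ eY.
have dE : d = (g Q x - g Q p) / ln Q by [].
have : Hq Q x = y by [].
rewrite Hqx /y => hh.
have : g Q x / ln Q - g Q p / ln Q = (g Q x - g Q p) / ln Q by field; lra.
move=> e1 [e2 e3] [e4 e5].
have eqd : d = g Q x / ln Q - g Q p / ln Q by rewrite dE; field; lra.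
move: e2 e3 e4 e5 eqd hh hu.
set A := ln (INR #|blocks Y n|) / ln Q / INR n.
set B := ln (INR #|blocks X n|) / ln Q / INR n.
set gx := g Q x / ln Q. set gp := g Q p / ln Q.
clearbody A B gx gp d.
lra.
Qed.

Close Scope R_scope.

Theorem proposition10 (Sigma : finType) (X Y : (Z -> Sigma) -> Prop) :
  (1 < #|Sigma|) ->
  constrained_system X -> constrained_system Y ->
  Rle (capacity X) (capacity Y) ->
  Rge (RXY X Y) (Hq_inv (INR #|Sigma|) (Rminus (capacity Y) (capacity X))).
Proof. exact: main_R. Qed.
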